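(* Consider an instance of the bicriteria asymmetric traveling salesman problem (bi-ATSP) with tour set $\mathcal{C}$, vector criterion $D=(D_1,D_2)$ and outcome set $\mathcal{D}=D(\mathcal{C})$. Let $i,j\in\{1,2\}$, $i\neq j$, and suppose criterion $D_i$ is more important than criterion $D_j$ with coefficient of relative importance $\theta\in(0,1)$; let $\hat P(\mathcal{D})$ be the corresponding reduced Pareto set. Suppose there exist tours $C', C'' \in P_D(\mathcal{C})$ with $D_j(C'')\neq D_j(C')$ such that $$\frac{D_i(C') - D_i(C'')}{D_j(C'') - D_j(C')} \geqslant \frac{1 - \theta}{\theta}.$$ Then $|P(\mathcal{D})| - |\hat{P}(\mathcal{D})| \geqslant 1$.
   Context: Bi-ATSP: given a complete directed graph $G=(V,E)$ on $n$ vertices, each arc $e\in E$ carries a weight vector $d(e)=(d_1(e),d_2(e))$ of positive numbers. $\mathcal{C}$ is the set of all $(n-1)!$ Hamiltonian circuits (tours) of $G$, and for a tour $C$, $D(C)=(D_1(C),D_2(C))$ with $D_j(C)=\sum_{e\in C} d_j(e)$. For vectors $y^*,y$, write $y^*\leq y$ if $y^*\neq y$ and $y^*_s\leqslant y_s$ for every coordinate $s$ (Pareto relation). For a vector criterion $F$ on $\mathcal{C}$, the set of pareto-optimal tours is $P_F(\mathcal{C})=\{C\in\mathcal{C}: \nexists C^*\in\mathcal{C},\ F(C^* )\leq F(C)\}$. The Pareto set is $P(\mathcal{D})=\{y\in\mathcal{D}: \nexists y^*\in\mathcal{D},\ y^*\leq y\}$. Reduced Pareto set: if criterion $D_i$ is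 declared more important than criterion $D_j$ ($\{i,j\}=\{1,2\}$) with coefficient of relative importance $\theta\in(0,1)$, define the new criterion $\hat D$ by $\hat D_j=\theta D_i+(1-\theta)D_j$ and $\hat D_i=D_i$, and set $\hat{P}(\mathcal{D})=D(P_{\hat D}(\mathcal{C}))$ (a subset of $P(\mathcal{D})$). *)

(* Defs.v *)
From HB Require Import structures.
From mathcomp Require Import all_boot all_order all_algebra all_fingroup.
Set Implicit Arguments. Unset Strict Implicit. Unset Printing Implicit Defensive.
Import Order.TTheory GRing.Theory Num.Theory.
Local Open Scope ring_scope.

(* A Hamiltonian circuit (tour) is
   encoded by its successor permutation s : {perm 'I_n}, which must be a
   single n-cycle; its arcs are (v, s v). *)
Definition is_tour (n : nat) (s : {perm 'I_n}) : bool :=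
  [forall x, porbit s x == [set: 'I_n]].

(* Arc weights: d k u v = d_{k+1}((u,v)), k : 'I_2. *)
Definition weights_pos (R : realFieldType) (n : nat)
  (d : 'I_2 -> 'I_n -> 'I_n -> R) : Prop :=
  forall k u v, u != v -> 0 < d k u v.

Definition Dvec (R : realFieldType) (n : nat) (d : 'I_2 -> 'I_n -> 'I_n -> R)
  (s : {perm 'I_n}) : {ffun 'I_2 -> R} :=
  [ffun k => \sum_(v : 'I_n) d k v (s v)].

Definition pdom (R : realFieldType) (y' y : {ffun 'I_2 -> R}) : bool :=
  (y' != y) && [forall k, y' k <= y k].

Definition pareto_tours (R : realFieldType) (n : nat)
  (F : {perm 'I_n} -> {ffun 'I_2 -> R}) : {set {perm 'I_n}} :=
  [set s | is_tour s && ~~ [exists s', is_tour s' && pdom (F s') (F s)]].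

Definition outcomes (R : realFieldType) (n : nat) (d : 'I_2 -> 'I_n -> 'I_n -> R)
  : seq {ffun 'I_2 -> R} :=
  undup [seq Dvec d s | s <- enum [set s : {perm 'I_n} | is_tour s]].

Definition pareto_set (R : realFieldType) (n : nat) (d : 'I_2 -> 'I_n -> 'I_n -> R)
  : seq {ffun 'I_2 -> R} :=
  [seq y <- outcomes d | ~~ has (fun y' => pdom y' y) (outcomes d)].

Definition Dhat (R : realFieldType) (n : nat) (d : 'I_2 -> 'I_n -> 'I_n -> R)
  (i j : 'I_2) (theta : R) (s : {perm 'I_n}) : {ffun 'I_2 -> R} :=
  [ffun k => if k == j then theta * Dvec d s i + (1 - theta) * Dvec d s j
             else Dvec d s k].

Definition reduced_pareto_set (R : realFieldType) (n : nat)
  (d : 'I_2 -> 'I_n -> 'I_n -> R) (i j : 'I_2) (theta : R)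
  : seq {ffun 'I_2 -> R} :=
  undup [seq Dvec d s | s <- enum (pareto_tours (Dhat d i j theta))].

(* Main.v *)
Require Import Defs.
From HB Require Import structures.
From mathcomp Require Import all_boot all_order all_algebra all_fingroup.
From mathcomp Require Import lra.
Import Order.TTheory GRing.Theory Num.Theory.
Local Open Scope ring_scope.

Lemma ord2_cases (i j k : 'I_2) : i != j -> k = i \/ k = j.
Proof.
case: i => [[|[|?]] ?]; case: j => [[|[|?]] ?]; case: k => [[|[|?]] ?] //= _;
  by [left; apply: val_inj | right; apply: val_inj].
Qed.

Lemma pdomE (R : realFieldType) (i j : 'I_2) (y' y : {ffun 'I_2 -> R}) :
  i != j -> pdom y' y =
  ((y' i < y i) && (y' j <= y j)) || ((y' i <= y i) && (y' j < y j)).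
Proof.
move=> ij.
have fe : (y' == y) = (y' i == y i) && (y' j == y j).
  apply/eqP/andP => [-> // | [/eqP h1 /eqP h2]].
  by apply/ffunP => k; case: (@ord2_cases i j k ij) => ->.
have fa : [forall k, y' k <= y k] = (y' i <= y i) && (y' j <= y j).
  apply/forallP/andP => [h | [h1 h2] k]; first by split; apply: h.
  by case: (@ord2_cases i j k ij) => ->.
rewrite /pdom fe fa !lt_neqAle.
by case: (y' i == y i); case: (y' j == y j); case: (y' i <= y i);
  case: (y' j <= y j).
Qed.

Section S.
Variables (R : realFieldType) (n : nat) (d : 'I_2 -> 'I_n -> 'I_n -> R)
  (i j : 'I_2) (theta : R).
Hypothesis ij : i != j.
Hypothesis th : 0 < theta < 1.

Lemma hatI s : Dhat d i j theta s i = Dvec d s i.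
Proof. by rewrite /Dhat ffunE (negbTE ij). Qed.
Lemma hatJ s : Dhat d i j theta s j =
  theta * Dvec d s i + (1 - theta) * Dvec d s j.
Proof. by rewrite /Dhat ffunE eqxx. Qed.

Lemma dom_hat s s' : pdom (Dvec d s') (Dvec d s) ->
  pdom (Dhat d i j theta s') (Dhat d i j theta s).
Proof.
case/andP: th => t0 t1.
rewrite !(@pdomE _ i j _ _ ij) !hatI !hatJ.
set a := Dvec d s' i; set b := Dvec d s i; set c := Dvec d s' j;
  set e := Dvec d s j.
case/orP => /andP [h1 h2].
  by rewrite h1 /=; apply/orP; left; nra.
rewrite h1 /=; apply/orP; right; nra.
Qed.

Lemma hat_pareto s : s \in pareto_tours (Dhat d i j theta) ->
  s \in pareto_tours (Dvec d).
Proof.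
rewrite !inE => /andP [-> /existsPn H] /=; apply/existsPn => s'.
apply/negP => /andP [t' /dom_hat h]; move: (H s'); by rewrite t' h.
Qed.

Lemma in_pareto_set s : s \in pareto_tours (Dvec d) ->
  Dvec d s \in pareto_set d.
Proof.
rewrite inE => /andP [ts /existsPn H].
rewrite mem_filter; apply/andP; split.
  apply/hasPn => y; rewrite /outcomes mem_undup => /mapP [s' hs' ->].
  rewrite mem_enum inE in hs'.
  by apply/negP => h; move: (H s'); rewrite hs' h.
rewrite /outcomes mem_undup; apply/mapP; exists s => //.
by rewrite mem_enum inE.
Qed.

Lemma excl s t : is_tour t -> s \in pareto_tours (Dvec d) ->
  pdom (Dhat d i j theta t) (Dhat d i j theta s) ->
  (1 <= size (pareto_set d) - size (reduced_pareto_set d i j theta))%N.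
Proof.
move=> tt sP dom.
have xP : Dvec d s \in pareto_set d by apply: in_pareto_set.
have xR : Dvec d s \notin reduced_pareto_set d i j theta.
  rewrite /reduced_pareto_set mem_undup; apply/negP => /mapP [s1].
  rewrite mem_enum inE => /andP [_ /existsPn H] ex.
  have e : Dhat d i j theta s1 = Dhat d i j theta s by rewrite /Dhat ex.
  by move: (H t); rewrite tt e dom.
have sub : {subset reduced_pareto_set d i j theta <= rem (Dvec d s) (pareto_set d)}.
  move=> y; rewrite mem_undup => /mapP [s1]; rewrite mem_enum => hs1 ey.
  rewrite mem_rem_uniq ?filter_uniq ?undup_uniq // inE; apply/andP; split.
    apply/negP => /eqP e; move: xR; rewrite -e ey /reduced_pareto_set mem_undup.
    by rewrite map_f // mem_enum.
  by rewrite ey; apply: in_pareto_set; apply: hat_pareto.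
have := uniq_leq_size (undup_uniq _) sub; rewrite size_rem //.
have : (0 < size (pareto_set d))%N by case: (pareto_set d) xP.
move=> h1 h2; rewrite subn_gt0; apply: leq_ltn_trans h2 _.
by rewrite prednK.
Qed.

End S.

Theorem proposition1 (R : realFieldType) (n : nat)
  (d : 'I_2 -> 'I_n -> 'I_n -> R) (i j : 'I_2) (theta : R)
  (C' C'' : {perm 'I_n}) :
  (2 <= n)%N ->
  weights_pos d ->
  i != j ->
  0 < theta < 1 ->
  C' \in pareto_tours (Dvec d) ->
  C'' \in pareto_tours (Dvec d) ->
  Dvec d C'' j != Dvec d C' j ->
  (1 - theta) / theta <=
    (Dvec d C' i - Dvec d C'' i) / (Dvec d C'' j - Dvec d C' j) ->
  (1 <= size (pareto_set d) - size (reduced_pareto_set d i j theta))%N.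
Proof.
move=> _ _ ij th P1 P2 ne H.
have /andP [T1 /existsPn N1] : is_tour C' && ~~ [exists s', is_tour s' && pdom (Dvec d s') (Dvec d C')].
  by move: P1; rewrite inE.
have /andP [T2 /existsPn N2] : is_tour C'' && ~~ [exists s', is_tour s' && pdom (Dvec d s') (Dvec d C'')].
  by move: P2; rewrite inE.
move: (N1 C''); rewrite T2 /= (@pdomE _ i j _ _ ij) => /norP [/negP n1 /negP n2].
move: (N2 C'); rewrite T1 /= (@pdomE _ i j _ _ ij) => /norP [/negP n3 /negP n4].
case/andP: th => t0 t1.
have ht : (1 - theta) / theta * theta = 1 - theta by rewrite divfK // gt_eqF.
move: ht H; set t := (1 - theta) / theta.
set ai := Dvec d C' i; set bi := Dvec d C'' i; set aj := Dvec d C' j;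
  set bj := Dvec d C'' j.
move=> ht H.
have hM : (ai - bi) / (bj - aj) * (bj - aj) = ai - bi
  by rewrite divfK // subr_eq0.
have [lt|lt] : aj < bj \/ bj < aj.
  by move: ne; rewrite neq_lt => /orP [h|h]; [right|left].
-
  have hi : bi < ai.
    rewrite ltNge; apply/negP => h; apply: n4; apply/andP; split; [exact: h | exact: lt].
  have h2 : t * (bj - aj) <= ai - bi.
    by rewrite -hM; apply: ler_wpM2r => //; rewrite subr_ge0 ltW.
  apply: (@excl R n d i j theta ij _ C' C'') => //; first by apply/andP.
  rewrite (@pdomE _ i j _ _ ij) !hatI // !hatJ // -/ai -/bi -/aj -/bj.
  apply/orP; left; rewrite hi /=; nra.
- have hi : ai < bi.
    rewrite ltNge; apply/negP => h; apply: n2; apply/andP; split; [exact: h | exact: lt].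
  have h2 : ai - bi <= t * (bj - aj).
    by rewrite -hM; apply: ler_wnM2r => //; rewrite subr_le0 ltW.
  apply: (@excl R n d i j theta ij _ C'' C') => //; first by apply/andP.
  rewrite (@pdomE _ i j _ _ ij) !hatI // !hatJ // -/ai -/bi -/aj -/bj.
  apply/orP; left; rewrite hi /=; nra.
Qed.
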